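(* Let $\alpha\in\mathbb{C}$ and let $\Gamma_\alpha\subset P^+(4)$ be the span of the seventeen elements $E^i_\alpha,F^i_\alpha,H^i_\alpha$ ($i=1,2,3$), $T^j_\alpha,D^j_\alpha$ ($j=1,\dots,4$) listed in the context. Then the linear map $\bar\rho_\alpha:\Gamma_\alpha\to\mathrm{End}(\mathcal{W}^{2|2})$ defined on this basis by $$\bar\rho_\alpha(T^1_\alpha)=tE_{13}+tE_{42},\quad \bar\rho_\alpha(T^2_\alpha)=tE_{14}-tE_{32},\quad \bar\rho_\alpha(T^3_\alpha)=tE_{24}+tE_{31},\quad \bar\rho_\alpha(T^4_\alpha)=-tE_{23}+tE_{41},$$ $$\bar\rho_\alpha(D^1_\alpha)=(d+\alpha t^{-1})E_{24}+dE_{31},\quad \bar\rho_\alpha(D^2_\alpha)=-(d+\alpha t^{-1})E_{23}+dE_{41},$$ $$\bar\rho_\alpha(D^3_\alpha)=(d+\alpha t^{-1})E_{13}+dE_{42},\quad \bar\rho_\alpha(D^4_\alpha)=(d+\alpha t^{-1})E_{14}-dE_{32},$$ $$\bar\rho_\alpha(E^1_\alpha)=t^2 I_4,\quad \bar\rho_\alpha(F^1_\alpha)=(d^2+\alpha t^{-1}d)(E_{11}+E_{22})+(d^2+\alpha d t^{-1})(E_{33}+E_{44}),\quad \bar\rho_\alpha(H^1_\alpha)=\Big(td+\tfrac{1+\alpha}{2}\Big)I_4,$$ $$\bar\rho_\alpha(E^2_\alpha)=E_{21},\quad \bar\rho_\alpha(F^2_\alpha)=-E_{12},\quad \bar\rho_\alpha(H^2_\alpha)=-E_{11}+E_{22},$$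 $$\bar\rho_\alpha(E^3_\alpha)=E_{34},\quad \bar\rho_\alpha(F^3_\alpha)=E_{43},\quad \bar\rho_\alpha(H^3_\alpha)=E_{33}-E_{44},$$ is an injective homomorphism of Lie superalgebras. Consequently $\Gamma(2,-1-\alpha,\alpha-1)$ embeds into $\mathrm{End}(\mathcal{W}^{2|2})$.
   Context: $P^+(4)$ is the Poisson superalgebra of finite sums $\sum_{i\ge0}a_i(t)\tau^i\otimes\omega_i$ with $a_i\in\mathbb{C}[t,t^{-1}]$, $\tau$ even, $\omega_i\in\Lambda(\xi_1,\xi_2,\eta_1,\eta_2)$ (Grassmann algebra on odd generators), with bracket, for homogeneous $A$ of parity $p(A)$, $\{A,B\}=\partial_\tau A\,\partial_tB-\partial_tA\,\partial_\tau B+(-1)^{p(A)+1}\sum_{i=1}^2(\partial_{\xi_i}A\,\partial_{\eta_i}B+\partial_{\eta_i}A\,\partial_{\xi_i}B)$ (left odd derivatives). The elements spanning $\Gamma_\alpha$ are: $E^1_\alpha=t^2$, $F^1_\alpha=\tau^2-2\alpha t^{-2}\xi_1\xi_2\eta_1\eta_2$, $H^1_\alpha=t\tau$, $E^2_\alpha=\xi_1\xi_2$, $F^2_\alpha=\eta_1\eta_2$, $H^2_\alpha=\xi_1\eta_1+\xi_2\eta_2$, $E^3_\alpha=\xi_1\eta_2$, $F^3_\alpha=\xi_2\eta_1$, $H^3_\alpha=\xi_1\eta_1-\xi_2\eta_2$, $T^1_\alpha=t\eta_1$, $T^2_\alpha=t\eta_2$, $T^3_\alpha=t\xi_1$, $T^4_\alpha=t\xi_2$,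 $D^1_\alpha=\tau\xi_1+\alpha t^{-1}\xi_1\xi_2\eta_2$, $D^2_\alpha=\tau\xi_2-\alpha t^{-1}\xi_1\xi_2\eta_1$, $D^3_\alpha=\tau\eta_1+\alpha t^{-1}\xi_2\eta_1\eta_2$, $D^4_\alpha=\tau\eta_2-\alpha t^{-1}\xi_1\eta_1\eta_2$. This span $\Gamma_\alpha$ is closed under the bracket and is a Lie superalgebra isomorphic to $\Gamma(2,-1-\alpha,\alpha-1)$, where $\Gamma(\sigma_1,\sigma_2,\sigma_3)$ ($\sigma_1+\sigma_2+\sigma_3=0$) is Scheunert's Lie superalgebra with even part $\mathfrak{sp}(\psi_1)\oplus\mathfrak{sp}(\psi_2)\oplus\mathfrak{sp}(\psi_3)$ and odd part $V_1\otimes V_2\otimes V_3$ ($V_i$ two-dimensional with nondegenerate skew forms $\psi_i$), odd bracket $[x_1\otimes x_2\otimes x_3,y_1\otimes y_2\otimes y_3]=\sum_{\{i,j,k\}=\{1,2,3\}}\sigma_i\psi_j(x_j,y_j)\psi_k(x_k,y_k)P_i(x_i,y_i)$ with $P_i(x,y)z=\psi_i(y,z)x-\psi_i(z,x)y$. Weyl algebra: $\mathcal{W}=\sum_{i\ge0}\mathbb{C}[t,t^{-1}]d^i$, the associative algebra generated by $\mathbb{C}[t,t^{-1}]$ and $d$ with relations $da=\frac{da}{dt}+ad$ for $a\in\mathbb{C}[t,t^{-1}]$ (the algebra of differential operators with Laurent polynomial coefficients, $d=\partial/\partial t$). $\mathrm{End}(\mathcal{W}^{2|2})$ is the Lie superalgebra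 of $4\times4$ matrices over $\mathcal{W}$, with rows/columns $1,2$ even and $3,4$ odd: a matrix is even if its entries in positions $(k,l)$ with $k,l$ of different parity vanish, odd if its entries with $k,l$ of equal parity vanish, and the bracket is $[X,Y]=XY-(-1)^{p(X)p(Y)}YX$ using matrix multiplication over $\mathcal{W}$. $E_{kl}$ denotes the $4\times4$ matrix with $1$ in position $(k,l)$ and $0$ elsewhere, $wE_{kl}$ has entry $w\in\mathcal{W}$ there, and $I_4$ is the identity matrix. *)

(* Defs.v *)
From HB Require Import structures.
From mathcomp Require Import all_boot all_order all_algebra.
From mathcomp Require Import finmap.
From mathcomp Require Import monalg.
Set Implicit Arguments. Unset Strict Implicit. Unset Printing Implicit Defensive.
Import Order.TTheory GRing.Theory Num.Theory.
Local Open Scope ring_scope.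

Definition lin1 {K : choiceType} {R : ringType} {V : lmodType R}
  (f : K -> V) (x : {malg R[K]}) : V :=
  \sum_(u <- msupp x) x@_u *: f u.

Definition bilin {K : choiceType} {R : ringType} {V : lmodType R}
  (f : K -> K -> V) (x y : {malg R[K]}) : V :=
  \sum_(u <- msupp x) \sum_(v <- msupp y) (x@_u * y@_v) *: f u v.

(* The Weyl algebra W = sum_i C[t,t^-1] d^i.  The basis element with key
   (a, m) : int * nat is the normally ordered monomial t^a d^m.  The
   product is the one forced by d a = da/dt + a d, i.e.
   (t^a d^m)(t^b d^n) = sum_k binom(m,k) b(b-1)...(b-k+1) t^(a+b-k) d^(m+n-k). *)
Section Weyl.
Variable C : numClosedFieldType.

Definition W := {malg C[(int * nat)%type]}.

Definition wmon (a : int) (m : nat) : W := << (a, m) >>.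

Definition ffz (b : int) (k : nat) : C := \prod_(j < k) (b - j%:Z)%:~R.

Definition wmul_mon (u v : int * nat) : W :=
  let: (a, m) := u in let: (b, n) := v in
  \sum_(k < m.+1) << ('C(m, k)%:R * ffz b k) *g (a + b - k%:Z, (m + n - k)%N) >>.

Definition wmul (x y : W) : W := bilin wmul_mon x y.

Definition w1 : W := wmon 0 0.
Definition wt : W := wmon 1 0.
Definition wtinv : W := wmon (-1) 0.
Definition wd : W := wmon 0 1.

(* End(W^{2|2}) : 4x4 matrices over W; rows/columns 1,2 even, 3,4 odd
   (indices 0,1 and 2,3 of 'I_4). *)
Definition SM := 'M[W]_4.

Definition mpar (i : 'I_4) : bool := (2 <= i)%N.

Definition smpart (b : bool) (X : SM) : SM :=
  \matrix_(i, j) if (mpar i (+) mpar j) == b then X i j else 0.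

Definition smmul (X Y : SM) : SM :=
  \matrix_(i, j) \sum_(k < 4) wmul (X i k) (Y k j).

Definition smbr (X Y : SM) : SM :=
  \sum_(b : bool) \sum_(c : bool)
    (smmul (smpart b X) (smpart c Y)
     - smmul (smpart c Y) (smpart b X) *~ ((-1) ^+ (b && c))).

(* w E_{kl}, with 1-based k, l as in the paper *)
Definition Ekl (k l : nat) (w : W) : SM :=
  \matrix_(i, j) if (i.+1 == k) && (j.+1 == l) then w else 0.

Definition Idw (w : W) : SM := \matrix_(i, j) if i == j then w else 0.

End Weyl.

(* Basis element with key (a, m, S)
   is t^a tau^m theta_S, where theta_S is the product, in increasing
   order of indices, of the odd generators theta_j (j in S), with
   theta_0 = xi_1, theta_1 = xi_2, theta_2 = eta_1, theta_3 = eta_2. *)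
Section Poisson.
Variable C : numClosedFieldType.

Definition PKey := (int * nat * {set 'I_4})%type.
Definition P := {malg C[PKey]}.

Definition pmon (k : PKey) : P := << k >>.

Definition podd (k : PKey) : bool := odd #|k.2|.

Definition pmul_mon (u v : PKey) : P :=
  let: (a, m, s1) := u in let: (b, n, s2) := v in
  if [disjoint s1 & s2] then
    (-1) ^+ #|[set st : 'I_4 * 'I_4 | (st.1 \in s1) && (st.2 \in s2) && (st.2 < st.1)%N]|
      *: pmon (a + b, (m + n)%N, s1 :|: s2)
  else 0.

Definition pmul (x y : P) : P := bilin pmul_mon x y.

Definition pdt (x : P) : P :=
  lin1 (fun k : PKey => let: (a, m, s1) := k in a%:~R *: pmon (a - 1, m, s1)) x.

Definition pdtau (x : P) : P :=
  lin1 (fun k : PKey => let: (a, m, s1) := k in m%:R *: pmon (a, m.-1, s1)) x.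

Definition pdth (j : 'I_4) (x : P) : P :=
  lin1 (fun k : PKey => let: (a, m, s1) := k in
          if j \in s1 then (-1) ^+ #|[set s in s1 | (s < j)%N]| *: pmon (a, m, s1 :\ j)
          else 0) x.

Definition ppart (b : bool) (x : P) : P :=
  lin1 (fun k : PKey => if podd k == b then pmon k else 0) x.

Definition xi_ (i : 'I_2) : 'I_4 := inord i.
Definition eta_ (i : 'I_2) : 'I_4 := inord (i + 2).

Definition pbr_hom (p : bool) (A B : P) : P :=
  pmul (pdtau A) (pdt B) - pmul (pdt A) (pdtau B)
  + (-1) ^+ (nat_of_bool p).+1 *:
      \sum_(i < 2) (pmul (pdth (xi_ i) A) (pdth (eta_ i) B)
                   + pmul (pdth (eta_ i) A) (pdth (xi_ i) B)).

Definition pbr (A B : P) : P :=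
  pbr_hom false (ppart false A) B + pbr_hom true (ppart true A) B.

Definition ptp (a : int) : P := pmon (a, 0%N, set0).
Definition ptau : P := pmon (0, 1%N, set0).
Definition pth (j : nat) : P := pmon (0, 0%N, [set (inord j : 'I_4)]).
Definition pxi1 : P := pth 0.
Definition pxi2 : P := pth 1.
Definition peta1 : P := pth 2.
Definition peta2 : P := pth 3.

End Poisson.
Arguments ptp {C}.
Arguments ptau {C}.
Arguments pth {C}.
Arguments pxi1 {C}.
Arguments pxi2 {C}.
Arguments peta1 {C}.
Arguments peta2 {C}.

(* The seventeen elements spanning Gamma_alpha, in the order
   E1 F1 H1 E2 F2 H2 E3 F3 H3 T1 T2 T3 T4 D1 D2 D3 D4,
   and their prescribed images under rho_alpha. *)
Section Gamma.
Variables (C : numClosedFieldType) (alpha : C).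

Local Notation "x ** y" := (pmul x y) (at level 40, left associativity).

Definition gam_list : seq (P C) :=
  [:: ptp 2;
      ptau ** ptau - (2 * alpha) *: (ptp (-2) ** (pxi1 ** (pxi2 ** (peta1 ** peta2))));
      ptp 1 ** ptau;
      pxi1 ** pxi2;
      peta1 ** peta2;
      pxi1 ** peta1 + pxi2 ** peta2;
      pxi1 ** peta2;
      pxi2 ** peta1;
      pxi1 ** peta1 - pxi2 ** peta2;
      ptp 1 ** peta1;
      ptp 1 ** peta2;
      ptp 1 ** pxi1;
      ptp 1 ** pxi2;
      ptau ** pxi1 + alpha *: (ptp (-1) ** (pxi1 ** (pxi2 ** peta2)));
      ptau ** pxi2 - alpha *: (ptp (-1) ** (pxi1 ** (pxi2 ** peta1)));
      ptau ** peta1 + alpha *: (ptp (-1) ** (pxi2 ** (peta1 ** peta2)));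
      ptau ** peta2 - alpha *: (ptp (-1) ** (pxi1 ** (peta1 ** peta2)))
  ].

Definition gam (i : 'I_17) : P C := nth 0 gam_list i.

(* parity of the i-th basis element: E,F,H even; T,D odd *)
Definition gpar (i : 'I_17) : bool := (9 <= i)%N.

Local Notation "x *w y" := (wmul x y) (at level 40, left associativity).
Local Notation dat := (wd C + alpha *: wtinv C).

Definition rho_list : seq (SM C) :=
  [:: Idw (wmon C 2 0);
      Ekl 1 1 (wd C *w wd C + alpha *: (wtinv C *w wd C))
      + Ekl 2 2 (wd C *w wd C + alpha *: (wtinv C *w wd C))
      + Ekl 3 3 (wd C *w wd C + alpha *: (wd C *w wtinv C))
      + Ekl 4 4 (wd C *w wd C + alpha *: (wd C *w wtinv C));
      Idw (wt C *w wd C + ((1 + alpha) / 2) *: w1 C);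
      Ekl 2 1 (w1 C);
      - Ekl 1 2 (w1 C);
      - Ekl 1 1 (w1 C) + Ekl 2 2 (w1 C);
      Ekl 3 4 (w1 C);
      Ekl 4 3 (w1 C);
      Ekl 3 3 (w1 C) - Ekl 4 4 (w1 C);
      Ekl 1 3 (wt C) + Ekl 4 2 (wt C);
      Ekl 1 4 (wt C) - Ekl 3 2 (wt C);
      Ekl 2 4 (wt C) + Ekl 3 1 (wt C);
      - Ekl 2 3 (wt C) + Ekl 4 1 (wt C);
      Ekl 2 4 dat + Ekl 3 1 (wd C);
      - Ekl 2 3 dat + Ekl 4 1 (wd C);
      Ekl 1 3 dat + Ekl 4 2 (wd C);
      Ekl 1 4 dat - Ekl 3 2 (wd C)
  ].

Definition rho (i : 'I_17) : SM C := nth 0 rho_list i.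

Definition gamma (c : 'I_17 -> C) : P C := \sum_(i < 17) c i *: gam i.
Definition rhoc (c : 'I_17 -> C) : SM C :=
  \matrix_(k, l) \sum_(i < 17) c i *: rho i k l.

End Gamma.

(* Main.v *)
Require Import Defs.
From HB Require Import structures.
From mathcomp Require Import all_boot all_order all_algebra.
From mathcomp Require Import finmap monalg.
From mathcomp Require Import ring.
Set Implicit Arguments. Unset Strict Implicit. Unset Printing Implicit Defensive.
Import GRing.Theory Num.Theory.
Local Open Scope ring_scope.

Definition Q := seq rat.
Fixpoint qadd (p q : Q) : Q :=
  match p, q with
  | [::], _ => q
  | _, [::] => p
  | a :: p', b :: q' => (a + b) :: qadd p' q'
  end.
Definition qmul (p q : Q) : Q :=
  foldr (fun a acc => qadd (map (fun b => a * b) q) (0 :: acc)) [::] p.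
Definition qopp (p : Q) : Q := map (fun a => - a) p.
Definition qzero (p : Q) : bool := all (fun a => a == 0) p.
Definition q1 : Q := [:: 1].

Definition FS (K : Type) := seq (Q * K).
Definition cscale {K} (q : Q) (l : FS K) : FS K := map (fun x => (qmul q x.1, x.2)) l.
Definition cneg {K} (l : FS K) : FS K := map (fun x => (qopp x.1, x.2)) l.
Definition clin {K} (g : K -> FS K) (l : FS K) : FS K :=
  flatten (map (fun x => cscale x.1 (g x.2)) l).
Definition cbil {K} (g : K -> K -> FS K) (l1 l2 : FS K) : FS K :=
  flatten (map (fun x => flatten (map (fun y => cscale (qmul x.1 y.1) (g x.2 y.2)) l2)) l1).

Fixpoint cins {K : eqType} (x : Q * K) (l : FS K) : FS K :=
  match l with
  | [::] => [:: x]
  | y :: l' => if x.2 == y.2 then (qadd x.1 y.1, y.2) :: l' else y :: cins x l'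
  end.
Definition cnorm {K : eqType} (l : FS K) : FS K := foldr cins [::] l.
Definition isz {K : eqType} (l : FS K) : bool := all (fun x => qzero x.1) (cnorm l).
Definition ceq {K : eqType} (l1 l2 : FS K) : bool := isz (l1 ++ cneg l2).

Section Gen.
Variables (C : numClosedFieldType) (alpha : C).

Fixpoint ev (p : Q) : C := if p is a :: p' then ratr a + alpha * ev p' else 0.

Lemma ev_nil : ev [::] = 0. Proof. by []. Qed.
Lemma ev_cons a p : ev (a :: p) = ratr a + alpha * ev p. Proof. by []. Qed.

Lemma ev_qadd p q : ev (qadd p q) = ev p + ev q.
Proof.
elim: p q => [|a p IH] [|b q] /=; rewrite ?add0r ?addr0 //.
by rewrite IH rmorphD; ring.
Qed.

Lemma ev_map_mul a q : ev (map (fun b => a * b) q) = ratr a * ev q.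
Proof.
elim: q => [|b q IH] /=; first by rewrite mulr0.
by rewrite IH rmorphM; ring.
Qed.

Lemma ev_qmul p q : ev (qmul p q) = ev p * ev q.
Proof.
elim: p => [|a p IH] /=; first by rewrite mul0r.
by rewrite ev_qadd ev_map_mul /= IH rmorph0; ring.
Qed.

Lemma ev_qopp p : ev (qopp p) = - ev p.
Proof. elim: p => [|a p IH] /=; first by rewrite oppr0. by rewrite IH rmorphN; ring. Qed.

Lemma ev_qzero p : qzero p -> ev p = 0.
Proof. elim: p => [|a p IH] //= /andP[/eqP -> /IH ->]. by rewrite rmorph0 mulr0 addr0. Qed.

Lemma ev1 (r : rat) : ev [:: r] = ratr r.
Proof. by rewrite /= mulr0 addr0. Qed.

Section Lin.
Variables (K : choiceType) (V : lmodType C) (f : K -> V).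

Lemma lin1_w (x : {malg C[K]}) (d : {fset K}) : (msupp x `<=` d)%fset ->
  lin1 f x = \sum_(u <- d) x@_u *: f u.
Proof.
move=> le; rewrite /lin1 (big_fset_incl _ le) //= => k _ /mcoeff_outdom ->.
by rewrite scale0r.
Qed.

Lemma lin1D x y : lin1 f (x + y) = lin1 f x + lin1 f y.
Proof.
rewrite (@lin1_w (x + y) (msupp x `|` msupp y)%fset) ?msuppD_le //.
rewrite (@lin1_w x (msupp x `|` msupp y)%fset) ?fsubsetUl //.
rewrite (@lin1_w y (msupp x `|` msupp y)%fset) ?fsubsetUr //.
by rewrite -big_split /=; apply: eq_bigr => u _; rewrite mcoeffD scalerDl.
Qed.

Lemma lin1Z c x : lin1 f (c *: x) = c *: lin1 f x.
Proof.
rewrite (@lin1_w (c *: x) (msupp x)) ?msuppZ_le // /lin1 scaler_sumr.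
by apply: eq_bigr => u _; rewrite mcoeffZ scalerA.
Qed.

Lemma lin10 : lin1 f 0 = 0.
Proof. by rewrite /lin1 msupp0 big_seq_fset0. Qed.

Lemma lin1U c k : lin1 f << c *g k >> = c *: f k.
Proof.
rewrite (@lin1_w _ [fset k]%fset) ?msuppU_le //.
by rewrite big_seq_fset1 mcoeffUU.
Qed.

Lemma lin1_sum (I : Type) (s : seq I) (F : I -> {malg C[K]}) :
  lin1 f (\sum_(i <- s) F i) = \sum_(i <- s) lin1 f (F i).
Proof.
elim: s => [|a s IH]; first by rewrite !big_nil lin10.
by rewrite !big_cons lin1D IH.
Qed.
End Lin.

Lemma bilin_lin (K : choiceType) (V : lmodType C) (f : K -> K -> V) x y :
  bilin f x y = lin1 (fun u => lin1 (f u) y) x.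
Proof.
rewrite /bilin /lin1; apply: eq_bigr => u _; rewrite scaler_sumr.
by apply: eq_bigr => v _; rewrite scalerA.
Qed.

Lemma monU_scale (K : choiceType) c (k : K) : << c *g k >> = c *: << k >> :> {malg C[K]}.
Proof. by apply/malgP => k'; rewrite mcoeffZ !mcoeffU mulr_natr. Qed.

Section Den.
Variables (K : eqType) (K' : choiceType) (emb : K -> K').

Definition den (l : FS K) : {malg C[K']} := \sum_(x <- l) ev x.1 *: << emb x.2 >>.

Lemma den_nil : den [::] = 0. Proof. by rewrite /den big_nil. Qed.
Lemma den_cons x l : den (x :: l) = ev x.1 *: << emb x.2 >> + den l.
Proof. by rewrite /den big_cons. Qed.
Lemma den_cat l1 l2 : den (l1 ++ l2) = den l1 + den l2.
Proof. by rewrite /den big_cat. Qed.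
Lemma den_flatten ls : den (flatten ls) = \sum_(l <- ls) den l.
Proof.
elim: ls => [|l ls IH]; first by rewrite big_nil den_nil.
by rewrite /= den_cat big_cons IH.
Qed.
Lemma den_cscale q l : den (cscale q l) = ev q *: den l.
Proof.
elim: l => [|x l IH]; first by rewrite /= !den_nil scaler0.
by rewrite /= !den_cons IH ev_qmul scalerDr scalerA.
Qed.
Lemma den_cneg l : den (cneg l) = - den l.
Proof.
elim: l => [|x l IH]; first by rewrite /= !den_nil oppr0.
by rewrite /= !den_cons IH ev_qopp scaleNr opprD.
Qed.
Lemma den_cins x l : den (cins x l) = den (x :: l).
Proof.
elim: l => [|y l IH] //=.
case: eqP => [E|_].
  by rewrite !den_cons E ev_qadd scalerDl addrA.
by rewrite !den_cons IH den_cons addrCA.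
Qed.
Lemma den_cnorm l : den (cnorm l) = den l.
Proof. by elim: l => [|x l IH] //=; rewrite den_cins !den_cons IH. Qed.
Lemma den_isz l : isz l -> den l = 0.
Proof.
rewrite /isz -den_cnorm; elim: (cnorm l) => [|x l' IH] /=; first by rewrite den_nil.
by case/andP => /ev_qzero h /IH; rewrite den_cons h scale0r add0r.
Qed.
Lemma den_ceq l1 l2 : ceq l1 l2 -> den l1 = den l2.
Proof. by move/den_isz; rewrite den_cat den_cneg => /eqP; rewrite subr_eq0 => /eqP. Qed.

Lemma lin1_den (V : lmodType C) (f : K' -> V) l :
  lin1 f (den l) = \sum_(x <- l) ev x.1 *: f (emb x.2).
Proof.
rewrite /den lin1_sum; apply: eq_bigr => x _.
by rewrite -monU_scale lin1U.
Qed.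

Lemma clin_den (f : K' -> {malg C[K']}) (g : K -> FS K) :
  (forall k, f (emb k) = den (g k)) ->
  forall l, lin1 f (den l) = den (clin g l).
Proof.
move=> H l; rewrite lin1_den /clin den_flatten big_map.
by apply: eq_bigr => x _; rewrite den_cscale H.
Qed.

Lemma cbil_den (f : K' -> K' -> {malg C[K']}) (g : K -> K -> FS K) :
  (forall k1 k2, f (emb k1) (emb k2) = den (g k1 k2)) ->
  forall l1 l2, bilin f (den l1) (den l2) = den (cbil g l1 l2).
Proof.
move=> H l1 l2; rewrite bilin_lin lin1_den /cbil den_flatten big_map.
apply: eq_bigr => x _; rewrite lin1_den den_flatten big_map scaler_sumr.
by apply: eq_bigr => y _; rewrite den_cscale H ev_qmul scalerA.
Qed.

End Den.
End Gen.

Definition B4 := (bool * bool * bool * bool)%type.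
Definition bsel (s : B4) (i : nat) : bool :=
  let: (b0, b1, b2, b3) := s in
  match i with 0 => b0 | 1 => b1 | 2 => b2 | _ => b3 end.
Definition setb (s : B4) : {set 'I_4} := [set i : 'I_4 | bsel s i].
Definition PK := (int * nat * B4)%type.
Definition pemb (k : PK) : PKey := (k.1.1, k.1.2, setb k.2).

Definition cdisj (s1 s2 : B4) : bool :=
  ~~ [|| bsel s1 0 && bsel s2 0, bsel s1 1 && bsel s2 1,
         bsel s1 2 && bsel s2 2 | bsel s1 3 && bsel s2 3].
Definition cinv (s1 s2 : B4) : nat :=
  ((bsel s1 1 && bsel s2 0) + (bsel s1 2 && bsel s2 0) + (bsel s1 2 && bsel s2 1)
  + (bsel s1 3 && bsel s2 0) + (bsel s1 3 && bsel s2 1) + (bsel s1 3 && bsel s2 2))%N.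
Definition bor (s1 s2 : B4) : B4 :=
  (bsel s1 0 || bsel s2 0, bsel s1 1 || bsel s2 1, bsel s1 2 || bsel s2 2, bsel s1 3 || bsel s2 3).
Definition cbelow (s : B4) (j : nat) : nat :=
  ((bsel s 0 && (0 < j)) + (bsel s 1 && (1 < j)) + (bsel s 2 && (2 < j)) + (bsel s 3 && (3 < j)))%N.
Definition bclr (s : B4) (j : nat) : B4 :=
  (bsel s 0 && (j != 0), bsel s 1 && (j != 1), bsel s 2 && (j != 2), bsel s 3 && (j != 3)).
Definition ccard (s : B4) : nat := (bsel s 0 + bsel s 1 + bsel s 2 + bsel s 3)%N.

Lemma ifin_ord (A : {set 'I_4}) (i : 'I_4) (k : nat) (h : (k < 4)%N) :
  val i = k -> (if i \in A then 1 else 0)%N = (Ordinal h \in A) :> nat.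
Proof. move=> e; have -> : i = Ordinal h by apply/val_inj. by case: (Ordinal h \in A). Qed.

Lemma card_I4 (A : {set 'I_4}) :
  #|A| = ((@Ordinal 4 0 isT \in A) + (@Ordinal 4 1 isT \in A)
        + (@Ordinal 4 2 isT \in A) + (@Ordinal 4 3 isT \in A))%N.
Proof.
rewrite -sum1_card big_mkcond /= !big_ord_recr big_ord0 /= add0n.
by congr (_ + _ + _ + _)%N; apply: ifin_ord.
Qed.

Lemma in_setb (s : B4) (i : 'I_4) : (i \in setb s) = bsel s i.
Proof. by rewrite inE. Qed.

Lemma setbU s1 s2 : setb s1 :|: setb s2 = setb (bor s1 s2).
Proof.
apply/setP => i; rewrite !inE.
case: s1 s2 => [[[a0 a1] a2] a3] [[[b0 b1] b2] b3].
by case: i => [[|[|[|[|i]]]] hi].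
Qed.

Lemma setb_disj s1 s2 : [disjoint setb s1 & setb s2] = cdisj s1 s2.
Proof.
rewrite -setI_eq0 -cards_eq0 card_I4 !inE.
case: s1 s2 => [[[a0 a1] a2] a3] [[[b0 b1] b2] b3] /=.
by case: a0; case: a1; case: a2; case: a3; case: b0; case: b1; case: b2; case: b3.
Qed.

Lemma setb_card s : #|setb s| = ccard s.
Proof. by rewrite card_I4 !inE. Qed.

Lemma in_setb_inord s (j : nat) : (j < 4)%N -> ((inord j : 'I_4) \in setb s) = bsel s j.
Proof. by move=> hj; rewrite inE inordK. Qed.

Lemma setb_below s (j : nat) : (j < 4)%N ->
  #|[set x in setb s | (x < (inord j : 'I_4))%N]| = cbelow s j.
Proof.
move=> hj; rewrite card_I4 !inE inordK //.
Qed.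

Lemma setb_clr s (j : nat) : (j < 4)%N -> setb s :\ inord j = setb (bclr s j).
Proof.
move=> hj; apply/setP => i; rewrite !inE.
have -> : (i != inord j) = (val i != j) by rewrite -(inj_eq val_inj) /= inordK.
case: s => [[[a0 a1] a2] a3].
by case: i => [[|[|[|[|i]]]] hi] //=; rewrite andbC eq_sym.
Qed.

Lemma setb_inv s1 s2 :
  #|[set st : 'I_4 * 'I_4 | (st.1 \in setb s1) && (st.2 \in setb s2) && (st.2 < st.1)%N]|
  = cinv s1 s2.
Proof.
rewrite -sum1_card big_mkcond /=.
set S := [set st : 'I_4 * 'I_4 | _].
have -> : \sum_(p : 'I_4 * 'I_4) (if p \in S then 1 else 0)%N =
          \sum_(p : 'I_4 * 'I_4) (if (p.1, p.2) \in S then 1 else 0)%N.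
  by apply: eq_bigr => [[]].
rewrite -(pair_bigA _ (fun i j => if (i, j) \in S then 1 else 0)%N) /=.
rewrite !big_ord_recr !big_ord0 /= /S !inE /=; clear S.
case: s1 s2 => [[[a0 a1] a2] a3] [[[b0 b1] b2] b3] /=.
by case: a0; case: a1; case: a2; case: a3; case: b0; case: b1; case: b2; case: b3.
Qed.


Definition cpmm (u v : PK) : FS PK :=
  let: (a, m, s1) := u in let: (b, n, s2) := v in
  if cdisj s1 s2 then [:: ([:: (-1) ^+ cinv s1 s2], (a + b, (m + n)%N, bor s1 s2))] else [::].
Definition cdt (k : PK) : FS PK :=
  let: (a, m, s) := k in [:: ([:: a%:~R], (a - 1, m, s))].
Definition cdtau (k : PK) : FS PK :=
  let: (a, m, s) := k in [:: ([:: m%:R], (a, m.-1, s))].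
Definition cdth (j : nat) (k : PK) : FS PK :=
  let: (a, m, s) := k in
  if bsel s j then [:: ([:: (-1) ^+ cbelow s j], (a, m, bclr s j))] else [::].
Definition cpp (b : bool) (k : PK) : FS PK :=
  if odd (ccard k.2) == b then [:: (q1, k)] else [::].

Definition cpmul := cbil cpmm.

Section PSide.
Variables (C : numClosedFieldType) (alpha : C).
Definition pden (l : FS PK) : P C := den alpha pemb l.

Lemma pden1 k : pden [:: (q1, k)] = pmon C (pemb k).
Proof. by rewrite /pden den_cons den_nil addr0 /q1 ev1 rmorph1 scale1r. Qed.

Lemma pden_single r k : pden [:: ([:: r], k)] = ratr r *: pmon C (pemb k).
Proof. by rewrite /pden den_cons den_nil addr0 ev1. Qed.

Lemma pmul_mon_den u v : pmul_mon C (pemb u) (pemb v) = pden (cpmm u v) :> P C.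
Proof.
case: u => [[a m] s1]; case: v => [[b n] s2]; rewrite /pemb /= setb_disj.
case: ifP => _; last by rewrite /pden den_nil.
by rewrite setb_inv setbU pden_single rmorphXn rmorphN rmorph1.
Qed.

Lemma pmul_den l1 l2 : pmul (pden l1) (pden l2) = pden (cpmul l1 l2).
Proof. exact: (cbil_den pmul_mon_den). Qed.

Lemma pdt_den l : pdt (pden l) = pden (clin cdt l).
Proof.
apply: clin_den => -[[a m] s]; rewrite -/(pden _).
by rewrite /= pden_single ratr_int.
Qed.

Lemma pdtau_den l : pdtau (pden l) = pden (clin cdtau l).
Proof.
apply: clin_den => -[[a m] s]; rewrite -/(pden _).
by rewrite /= pden_single ratr_nat.
Qed.

Lemma pdth_den (j : nat) l : (j < 4)%N -> pdth (inord j) (pden l) = pden (clin (cdth j) l).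
Proof.
move=> hj; apply: clin_den => -[[a m] s]; rewrite -/(pden _).
rewrite /= in_setb_inord //; case: ifP => _; last by rewrite /pden den_nil.
by rewrite setb_below // setb_clr // pden_single rmorphXn rmorphN rmorph1.
Qed.

Lemma ppart_den b l : ppart b (pden l) = pden (clin (cpp b) l).
Proof.
apply: clin_den => -[[a m] s]; rewrite -/(pden _).
rewrite /cpp /podd /= setb_card; case: ifP => _; last by rewrite /pden den_nil.
by rewrite pden1.
Qed.

Lemma pden_cat l1 l2 : pden (l1 ++ l2) = pden l1 + pden l2.
Proof. exact: den_cat. Qed.
Lemma pden_cneg l : pden (cneg l) = - pden l.
Proof. exact: den_cneg. Qed.
Lemma pden_cscale q l : pden (cscale q l) = ev alpha q *: pden l.
Proof. exact: den_cscale. Qed.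
End PSide.

Definition csgn (p : bool) (l : FS PK) := if p then l else cneg l.
Definition cpbrh (p : bool) (A B : FS PK) : FS PK :=
  cpmul (clin cdtau A) (clin cdt B) ++ cneg (cpmul (clin cdt A) (clin cdtau B))
  ++ csgn p ((cpmul (clin (cdth 0) A) (clin (cdth 2) B) ++ cpmul (clin (cdth 2) A) (clin (cdth 0) B))
           ++ (cpmul (clin (cdth 1) A) (clin (cdth 3) B) ++ cpmul (clin (cdth 3) A) (clin (cdth 1) B))).
Definition cpbr (A B : FS PK) : FS PK :=
  cpbrh false (clin (cpp false) A) B ++ cpbrh true (clin (cpp true) A) B.

Section PBr.
Variables (C : numClosedFieldType) (alpha : C).
Local Notation pden := (pden alpha).

Lemma pbrh_den p A B : pbr_hom p (pden A) (pden B) = pden (cpbrh p A B).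
Proof.
rewrite /pbr_hom !big_ord_recr big_ord0 /= add0r /xi_ /eta_ /=.
change (1 + 2)%N with 3%N; change (0 + 2)%N with 2%N.
rewrite !pdth_den // !pdt_den !pdtau_den !pmul_den.
rewrite /cpbrh !pden_cat pden_cneg [RHS]addrA.
congr (_ + _); case: p; rewrite /csgn /= ?pden_cneg !pden_cat.
  by rewrite expr2 mulN1r opprK scale1r.
by rewrite expr1 scaleN1r.
Qed.

Lemma pbr_den A B : pbr (pden A) (pden B) = pden (cpbr A B).
Proof. by rewrite /pbr !ppart_den !pbrh_den /cpbr pden_cat. Qed.
End PBr.

Definition WK := (int * nat)%type.
Fixpoint ffzi (b : int) (k : nat) : int :=
  if k is k'.+1 then ffzi b k' * (b - k'%:Z) else 1.
Definition cwmm (u v : WK) : FS WK :=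
  let: (a, m) := u in let: (b, n) := v in
  map (fun k => ([:: ('C(m, k)%:R * (ffzi b k)%:~R : rat)], (a + b - k%:Z, (m + n - k)%N)))
      (iota 0 m.+1).
Definition cwmul := cbil cwmm.

Definition CM := nat -> nat -> FS WK.
Definition cmpart (b : bool) (X : CM) : CM :=
  fun i j => if ((2 <= i)%N (+) (2 <= j)%N) == b then X i j else [::].
Definition cmmul (X Y : CM) : CM :=
  fun i j => flatten (map (fun k => cwmul (X i k) (Y k j)) (iota 0 4)).
Definition cmadd (X Y : CM) : CM := fun i j => X i j ++ Y i j.
Definition cmneg (X : CM) : CM := fun i j => cneg (X i j).
Definition cmsc (q : Q) (X : CM) : CM := fun i j => cscale q (X i j).
Definition cmsgn (b : bool) (X : CM) : CM := if b then cmneg X else X.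
Definition cT (b c : bool) (X Y : CM) : CM :=
  cmadd (cmmul (cmpart b X) (cmpart c Y)) (cmneg (cmsgn (b && c) (cmmul (cmpart c Y) (cmpart b X)))).
Definition cbrM (X Y : CM) : CM :=
  cmadd (cmadd (cT true true X Y) (cT true false X Y)) (cmadd (cT false true X Y) (cT false false X Y)).
Definition cmeq (X Y : CM) : bool :=
  all (fun i => all (fun j => ceq (X i j) (Y i j)) (iota 0 4)) (iota 0 4).
Definition cE (k l : nat) (L : FS WK) : CM :=
  fun i j => if (i.+1 == k) && (j.+1 == l) then L else [::].
Definition cI (L : FS WK) : CM := fun i j => if i == j then L else [::].
Definition cmzero : CM := fun _ _ => [::].

Section WSide.
Variables (C : numClosedFieldType) (alpha : C).
Definition wden (l : FS WK) : W C := den alpha (fun k : WK => k) l.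
Definition mden (X : CM) : SM C := \matrix_(i, j) wden (X i j).

Lemma wden1 k : wden [:: (q1, k)] = << k >>.
Proof. by rewrite /wden den_cons den_nil addr0 /q1 ev1 rmorph1 scale1r. Qed.

Lemma wmon_den a m : wmon C a m = wden [:: (q1, (a, m))].
Proof. by rewrite wden1. Qed.

Lemma ffz_int b k : ffz C b k = (ffzi b k)%:~R.
Proof.
elim: k => [|k IH]; first by rewrite /ffz big_ord0.
by rewrite /ffz big_ord_recr /= -/(ffz C b k) IH intrM.
Qed.

Lemma wmul_mon_den u v : wmul_mon C u v = wden (cwmm u v).
Proof.
case: u => a m; case: v => b n; rewrite /wmul_mon /cwmm /wden /den big_map.
rewrite -(big_mkord xpredT (fun k => << ('C(m, k)%:R * ffz C b k) *g (a + b - k%:Z, (m + n - k)%N) >>)).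
apply: eq_bigr => k _ /=.
by rewrite monU_scale mulr0 addr0 rmorphM rmorph_nat rmorph_int ffz_int.
Qed.

Lemma wmul_den l1 l2 : wmul (wden l1) (wden l2) = wden (cwmul l1 l2).
Proof. exact: (cbil_den wmul_mon_den). Qed.

Lemma wden_cat l1 l2 : wden (l1 ++ l2) = wden l1 + wden l2.
Proof. exact: den_cat. Qed.
Lemma wden_cneg l : wden (cneg l) = - wden l.
Proof. exact: den_cneg. Qed.
Lemma wden_cscale q l : wden (cscale q l) = ev alpha q *: wden l.
Proof. exact: den_cscale. Qed.
Lemma wden_nil : wden [::] = 0.
Proof. exact: den_nil. Qed.

Lemma mden_add X Y : mden (cmadd X Y) = mden X + mden Y.
Proof. by apply/matrixP => i j; rewrite !mxE wden_cat. Qed.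
Lemma mden_neg X : mden (cmneg X) = - mden X.
Proof. by apply/matrixP => i j; rewrite !mxE wden_cneg. Qed.
Lemma mden_zero : mden cmzero = 0.
Proof. by apply/matrixP => i j; rewrite !mxE wden_nil. Qed.

Lemma smpart_den b X : smpart b (mden X) = mden (cmpart b X).
Proof.
apply/matrixP => i j; rewrite !mxE /cmpart /mpar.
by case: ifP => _; rewrite ?wden_nil.
Qed.

Lemma smmul_den X Y : smmul (mden X) (mden Y) = mden (cmmul X Y).
Proof.
apply/matrixP => i j; rewrite !mxE /cmmul /wden den_flatten big_map.
have -> : forall F : nat -> W C, \sum_(k <- iota 0 4) F k = \sum_(k < 4) F k.
  by move=> F; rewrite -(big_mkord (fun _ => true) F).
apply: eq_bigr => k _; rewrite !mxE; exact: wmul_den.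
Qed.
End WSide.

Lemma cmsgnT X : cmsgn true X = cmneg X. Proof. by []. Qed.
Lemma cmsgnF X : cmsgn false X = X. Proof. by []. Qed.

Lemma sum_bool (V : zmodType) (F : bool -> V) : \sum_(b : bool) F b = F true + F false.
Proof. by rewrite big_bool. Qed.

Section WSide2.
Variables (C : numClosedFieldType) (alpha : C).
Local Notation mden := (mden alpha).
Local Notation wden := (wden alpha).

Lemma smbr_den X Y : smbr (mden X) (mden Y) = mden (cbrM X Y).
Proof.
rewrite /smbr !sum_bool.
change (true && true) with true; change (true && false) with false.
change (false && true) with false; change (false && false) with false.
rewrite !smpart_den !smmul_den expr1 expr0 mulrN1z !mulr1z.
rewrite -!mden_neg -!mden_add.
by [].
Qed.

Lemma Ekl_den k l L : Ekl k l (wden L) = mden (cE k l L).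
Proof. by apply/matrixP => i j; rewrite !mxE /cE; case: ifP; rewrite ?wden_nil. Qed.

Lemma Idw_den L : Idw (wden L) = mden (cI L).
Proof. by apply/matrixP => i j; rewrite !mxE /cI val_eqE; case: ifP; rewrite ?wden_nil. Qed.

Lemma cmeq_den X Y : cmeq X Y -> mden X = mden Y.
Proof.
move=> h; apply/matrixP => i j; rewrite !mxE; apply: den_ceq.
move/allP: h => /(_ i); rewrite mem_iota ltn_ord => /(_ isT) /allP /(_ j).
by rewrite mem_iota ltn_ord => /(_ isT).
Qed.
End WSide2.

Definition fr (n : int) (d : nat) : rat := n%:~R / d%:R.
Definition bF : B4 := (false, false, false, false).
Definition cptp (a : int) : FS PK := [:: (q1, (a, 0%N, bF))].
Definition cptau : FS PK := [:: (q1, (0, 1%N, bF))].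
Definition cx1 : FS PK := [:: (q1, (0, 0%N, (true, false, false, false)))].
Definition cx2 : FS PK := [:: (q1, (0, 0%N, (false, true, false, false)))].
Definition ce1 : FS PK := [:: (q1, (0, 0%N, (false, false, true, false)))].
Definition ce2 : FS PK := [:: (q1, (0, 0%N, (false, false, false, true)))].
Definition qal : Q := [:: 0; 1].
Definition q2al : Q := [:: 0; 2].

Local Notation "x ** y" := (cpmul x y) (at level 40, left associativity).

Definition gl : seq (FS PK) :=
  [:: cptp 2;
      cptau ** cptau ++ cneg (cscale q2al (cptp (-2) ** (cx1 ** (cx2 ** (ce1 ** ce2)))));
      cptp 1 ** cptau;
      cx1 ** cx2;
      ce1 ** ce2;
      cx1 ** ce1 ++ cx2 ** ce2;
      cx1 ** ce2;
      cx2 ** ce1;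
      cx1 ** ce1 ++ cneg (cx2 ** ce2);
      cptp 1 ** ce1;
      cptp 1 ** ce2;
      cptp 1 ** cx1;
      cptp 1 ** cx2;
      cptau ** cx1 ++ cscale qal (cptp (-1) ** (cx1 ** (cx2 ** ce2)));
      cptau ** cx2 ++ cneg (cscale qal (cptp (-1) ** (cx1 ** (cx2 ** ce1))));
      cptau ** ce1 ++ cscale qal (cptp (-1) ** (cx2 ** (ce1 ** ce2)));
      cptau ** ce2 ++ cneg (cscale qal (cptp (-1) ** (cx1 ** (ce1 ** ce2))))
  ].

Definition cw (a : int) (m : nat) : FS WK := [:: (q1, (a, m))].
Definition cw1 := cw 0 0.
Definition cwt := cw 1 0.
Definition cwti := cw (-1) 0.
Definition cwd := cw 0 1.
Definition cdat := cwd ++ cscale qal cwti.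
Definition qh : Q := [:: fr 1 2; fr 1 2].
Local Notation "x *w y" := (cwmul x y) (at level 40, left associativity).
Local Notation "x +m y" := (cmadd x y) (at level 50, left associativity).

Definition rl : seq CM :=
  [:: cI (cw 2 0);
      cE 1 1 (cwd *w cwd ++ cscale qal (cwti *w cwd))
      +m cE 2 2 (cwd *w cwd ++ cscale qal (cwti *w cwd))
      +m cE 3 3 (cwd *w cwd ++ cscale qal (cwd *w cwti))
      +m cE 4 4 (cwd *w cwd ++ cscale qal (cwd *w cwti));
      cI (cwt *w cwd ++ cscale qh cw1);
      cE 2 1 cw1;
      cmneg (cE 1 2 cw1);
      cmneg (cE 1 1 cw1) +m cE 2 2 cw1;
      cE 3 4 cw1;
      cE 4 3 cw1;
      cE 3 3 cw1 +m cmneg (cE 4 4 cw1);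
      cE 1 3 cwt +m cE 4 2 cwt;
      cE 1 4 cwt +m cmneg (cE 3 2 cwt);
      cE 2 4 cwt +m cE 3 1 cwt;
      cmneg (cE 2 3 cwt) +m cE 4 1 cwt;
      cE 2 4 cdat +m cE 3 1 cwd;
      cmneg (cE 2 3 cdat) +m cE 4 1 cwd;
      cE 1 3 cdat +m cE 4 2 cwd;
      cE 1 4 cdat +m cmneg (cE 3 2 cwd)
  ].

Definition tabl : seq ((nat * nat) * seq (nat * Q)) := [::
  ((0,1)%N, [:: (2%N, [:: fr (-4) 1])]);
  ((0,2)%N, [:: (0%N, [:: fr (-2) 1])]);
  ((0,13)%N, [:: (11%N, [:: fr (-2) 1])]);
  ((0,14)%N, [:: (12%N, [:: fr (-2) 1])]);
  ((0,15)%N, [:: (9%N, [:: fr (-2) 1])]);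
  ((0,16)%N, [:: (10%N, [:: fr (-2) 1])]);
  ((1,0)%N, [:: (2%N, [:: fr (4) 1])]);
  ((1,2)%N, [:: (1%N, [:: fr (2) 1])]);
  ((1,9)%N, [:: (15%N, [:: fr (2) 1])]);
  ((1,10)%N, [:: (16%N, [:: fr (2) 1])]);
  ((1,11)%N, [:: (13%N, [:: fr (2) 1])]);
  ((1,12)%N, [:: (14%N, [:: fr (2) 1])]);
  ((2,0)%N, [:: (0%N, [:: fr (2) 1])]);
  ((2,1)%N, [:: (1%N, [:: fr (-2) 1])]);
  ((2,9)%N, [:: (9%N, [:: fr (1) 1])]);
  ((2,10)%N, [:: (10%N, [:: fr (1) 1])]);
  ((2,11)%N, [:: (11%N, [:: fr (1) 1])]);
  ((2,12)%N, [:: (12%N, [:: fr (1) 1])]);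
  ((2,13)%N, [:: (13%N, [:: fr (-1) 1])]);
  ((2,14)%N, [:: (14%N, [:: fr (-1) 1])]);
  ((2,15)%N, [:: (15%N, [:: fr (-1) 1])]);
  ((2,16)%N, [:: (16%N, [:: fr (-1) 1])]);
  ((3,4)%N, [:: (5%N, [:: fr (-1) 1])]);
  ((3,5)%N, [:: (3%N, [:: fr (-2) 1])]);
  ((3,9)%N, [:: (12%N, [:: fr (-1) 1])]);
  ((3,10)%N, [:: (11%N, [:: fr (1) 1])]);
  ((3,15)%N, [:: (14%N, [:: fr (-1) 1])]);
  ((3,16)%N, [:: (13%N, [:: fr (1) 1])]);
  ((4,3)%N, [:: (5%N, [:: fr (1) 1])]);
  ((4,5)%N, [:: (4%N, [:: fr (2) 1])]);
  ((4,11)%N, [:: (10%N, [:: fr (-1) 1])]);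
  ((4,12)%N, [:: (9%N, [:: fr (1) 1])]);
  ((4,13)%N, [:: (16%N, [:: fr (-1) 1])]);
  ((4,14)%N, [:: (15%N, [:: fr (1) 1])]);
  ((5,3)%N, [:: (3%N, [:: fr (2) 1])]);
  ((5,4)%N, [:: (4%N, [:: fr (-2) 1])]);
  ((5,9)%N, [:: (9%N, [:: fr (-1) 1])]);
  ((5,10)%N, [:: (10%N, [:: fr (-1) 1])]);
  ((5,11)%N, [:: (11%N, [:: fr (1) 1])]);
  ((5,12)%N, [:: (12%N, [:: fr (1) 1])]);
  ((5,13)%N, [:: (13%N, [:: fr (1) 1])]);
  ((5,14)%N, [:: (14%N, [:: fr (1) 1])]);
  ((5,15)%N, [:: (15%N, [:: fr (-1) 1])]);
  ((5,16)%N, [:: (16%N, [:: fr (-1) 1])]);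
  ((6,7)%N, [:: (8%N, [:: fr (1) 1])]);
  ((6,8)%N, [:: (6%N, [:: fr (-2) 1])]);
  ((6,9)%N, [:: (10%N, [:: fr (-1) 1])]);
  ((6,12)%N, [:: (11%N, [:: fr (1) 1])]);
  ((6,14)%N, [:: (13%N, [:: fr (1) 1])]);
  ((6,15)%N, [:: (16%N, [:: fr (-1) 1])]);
  ((7,6)%N, [:: (8%N, [:: fr (-1) 1])]);
  ((7,8)%N, [:: (7%N, [:: fr (2) 1])]);
  ((7,10)%N, [:: (9%N, [:: fr (-1) 1])]);
  ((7,11)%N, [:: (12%N, [:: fr (1) 1])]);
  ((7,13)%N, [:: (14%N, [:: fr (1) 1])]);
  ((7,16)%N, [:: (15%N, [:: fr (-1) 1])]);
  ((8,6)%N, [:: (6%N, [:: fr (2) 1])]);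
  ((8,7)%N, [:: (7%N, [:: fr (-2) 1])]);
  ((8,9)%N, [:: (9%N, [:: fr (-1) 1])]);
  ((8,10)%N, [:: (10%N, [:: fr (1) 1])]);
  ((8,11)%N, [:: (11%N, [:: fr (1) 1])]);
  ((8,12)%N, [:: (12%N, [:: fr (-1) 1])]);
  ((8,13)%N, [:: (13%N, [:: fr (1) 1])]);
  ((8,14)%N, [:: (14%N, [:: fr (-1) 1])]);
  ((8,15)%N, [:: (15%N, [:: fr (-1) 1])]);
  ((8,16)%N, [:: (16%N, [:: fr (1) 1])]);
  ((9,1)%N, [:: (15%N, [:: fr (-2) 1])]);
  ((9,2)%N, [:: (9%N, [:: fr (-1) 1])]);
  ((9,3)%N, [:: (12%N, [:: fr (1) 1])]);
  ((9,5)%N, [:: (9%N, [:: fr (1) 1])]);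
  ((9,6)%N, [:: (10%N, [:: fr (1) 1])]);
  ((9,8)%N, [:: (9%N, [:: fr (1) 1])]);
  ((9,11)%N, [:: (0%N, [:: fr (1) 1])]);
  ((9,13)%N, [:: (2%N, [:: fr (1) 1]); (5%N, [:: fr (1) 2; fr (1) 2]); (8%N, [:: fr (1) 2; fr (-1) 2])]);
  ((9,14)%N, [:: (7%N, [:: fr (1) 1; fr (-1) 1])]);
  ((9,16)%N, [:: (4%N, [:: fr (-1) 1; fr (-1) 1])]);
  ((10,1)%N, [:: (16%N, [:: fr (-2) 1])]);
  ((10,2)%N, [:: (10%N, [:: fr (-1) 1])]);
  ((10,3)%N, [:: (11%N, [:: fr (-1) 1])]);
  ((10,5)%N, [:: (10%N, [:: fr (1) 1])]);
  ((10,7)%N, [:: (9%N, [:: fr (1) 1])]);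
  ((10,8)%N, [:: (10%N, [:: fr (-1) 1])]);
  ((10,12)%N, [:: (0%N, [:: fr (1) 1])]);
  ((10,13)%N, [:: (6%N, [:: fr (1) 1; fr (-1) 1])]);
  ((10,14)%N, [:: (2%N, [:: fr (1) 1]); (5%N, [:: fr (1) 2; fr (1) 2]); (8%N, [:: fr (-1) 2; fr (1) 2])]);
  ((10,15)%N, [:: (4%N, [:: fr (1) 1; fr (1) 1])]);
  ((11,1)%N, [:: (13%N, [:: fr (-2) 1])]);
  ((11,2)%N, [:: (11%N, [:: fr (-1) 1])]);
  ((11,4)%N, [:: (10%N, [:: fr (1) 1])]);
  ((11,5)%N, [:: (11%N, [:: fr (-1) 1])]);
  ((11,7)%N, [:: (12%N, [:: fr (-1) 1])]);
  ((11,8)%N, [:: (11%N, [:: fr (-1) 1])]);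
  ((11,9)%N, [:: (0%N, [:: fr (1) 1])]);
  ((11,14)%N, [:: (3%N, [:: fr (-1) 1; fr (-1) 1])]);
  ((11,15)%N, [:: (2%N, [:: fr (1) 1]); (5%N, [:: fr (-1) 2; fr (-1) 2]); (8%N, [:: fr (-1) 2; fr (1) 2])]);
  ((11,16)%N, [:: (6%N, [:: fr (-1) 1; fr (1) 1])]);
  ((12,1)%N, [:: (14%N, [:: fr (-2) 1])]);
  ((12,2)%N, [:: (12%N, [:: fr (-1) 1])]);
  ((12,4)%N, [:: (9%N, [:: fr (-1) 1])]);
  ((12,5)%N, [:: (12%N, [:: fr (-1) 1])]);
  ((12,6)%N, [:: (11%N, [:: fr (-1) 1])]);
  ((12,8)%N, [:: (12%N, [:: fr (1) 1])]);
  ((12,10)%N, [:: (0%N, [:: fr (1) 1])]);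
  ((12,13)%N, [:: (3%N, [:: fr (1) 1; fr (1) 1])]);
  ((12,15)%N, [:: (7%N, [:: fr (-1) 1; fr (1) 1])]);
  ((12,16)%N, [:: (2%N, [:: fr (1) 1]); (5%N, [:: fr (-1) 2; fr (-1) 2]); (8%N, [:: fr (1) 2; fr (-1) 2])]);
  ((13,0)%N, [:: (11%N, [:: fr (2) 1])]);
  ((13,2)%N, [:: (13%N, [:: fr (1) 1])]);
  ((13,4)%N, [:: (16%N, [:: fr (1) 1])]);
  ((13,5)%N, [:: (13%N, [:: fr (-1) 1])]);
  ((13,7)%N, [:: (14%N, [:: fr (-1) 1])]);
  ((13,8)%N, [:: (13%N, [:: fr (-1) 1])]);
  ((13,9)%N, [:: (2%N, [:: fr (1) 1]); (5%N, [:: fr (1) 2; fr (1) 2]); (8%N, [:: fr (1) 2; fr (-1) 2])]);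
  ((13,10)%N, [:: (6%N, [:: fr (1) 1; fr (-1) 1])]);
  ((13,12)%N, [:: (3%N, [:: fr (1) 1; fr (1) 1])]);
  ((13,15)%N, [:: (1%N, [:: fr (1) 1])]);
  ((14,0)%N, [:: (12%N, [:: fr (2) 1])]);
  ((14,2)%N, [:: (14%N, [:: fr (1) 1])]);
  ((14,4)%N, [:: (15%N, [:: fr (-1) 1])]);
  ((14,5)%N, [:: (14%N, [:: fr (-1) 1])]);
  ((14,6)%N, [:: (13%N, [:: fr (-1) 1])]);
  ((14,8)%N, [:: (14%N, [:: fr (1) 1])]);
  ((14,9)%N, [:: (7%N, [:: fr (1) 1; fr (-1) 1])]);
  ((14,10)%N, [:: (2%N, [:: fr (1) 1]); (5%N, [:: fr (1) 2; fr (1) 2]); (8%N, [:: fr (-1) 2; fr (1) 2])]);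
  ((14,11)%N, [:: (3%N, [:: fr (-1) 1; fr (-1) 1])]);
  ((14,16)%N, [:: (1%N, [:: fr (1) 1])]);
  ((15,0)%N, [:: (9%N, [:: fr (2) 1])]);
  ((15,2)%N, [:: (15%N, [:: fr (1) 1])]);
  ((15,3)%N, [:: (14%N, [:: fr (1) 1])]);
  ((15,5)%N, [:: (15%N, [:: fr (1) 1])]);
  ((15,6)%N, [:: (16%N, [:: fr (1) 1])]);
  ((15,8)%N, [:: (15%N, [:: fr (1) 1])]);
  ((15,10)%N, [:: (4%N, [:: fr (1) 1; fr (1) 1])]);
  ((15,11)%N, [:: (2%N, [:: fr (1) 1]); (5%N, [:: fr (-1) 2; fr (-1) 2]); (8%N, [:: fr (-1) 2; fr (1) 2])]);
  ((15,12)%N, [:: (7%N, [:: fr (-1) 1; fr (1) 1])]);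
  ((15,13)%N, [:: (1%N, [:: fr (1) 1])]);
  ((16,0)%N, [:: (10%N, [:: fr (2) 1])]);
  ((16,2)%N, [:: (16%N, [:: fr (1) 1])]);
  ((16,3)%N, [:: (13%N, [:: fr (-1) 1])]);
  ((16,5)%N, [:: (16%N, [:: fr (1) 1])]);
  ((16,7)%N, [:: (15%N, [:: fr (1) 1])]);
  ((16,8)%N, [:: (16%N, [:: fr (-1) 1])]);
  ((16,9)%N, [:: (4%N, [:: fr (-1) 1; fr (-1) 1])]);
  ((16,11)%N, [:: (6%N, [:: fr (-1) 1; fr (1) 1])]);
  ((16,12)%N, [:: (2%N, [:: fr (1) 1]); (5%N, [:: fr (-1) 2; fr (-1) 2]); (8%N, [:: fr (1) 2; fr (-1) 2])]);
  ((16,14)%N, [:: (1%N, [:: fr (1) 1])])].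

Fixpoint lk {T : eqType} {U} (d : U) (s : seq (T * U)) (k : T) : U :=
  if s is (k', q) :: s' then (if k == k' then q else lk d s' k) else d.
Definition tabij (i j : nat) : seq (nat * Q) := lk [::] tabl (i, j).
Definition tabk (i j k : nat) : Q := lk [::] (tabij i j) k.

Definition combP (i j : nat) : FS PK :=
  flatten [seq cscale (tabk i j k) (nth [::] gl k) | k <- iota 0 17].
Definition combM (i j : nat) : CM :=
  fun r s => flatten [seq cscale (tabk i j k) (nth cmzero rl k r s) | k <- iota 0 17].

Definition chkP : bool :=
  all (fun i => all (fun j => ceq (cpbr (nth [::] gl i) (nth [::] gl j)) (combP i j)) (iota 0 17)) (iota 0 17).
Definition chkM : bool :=
  all (fun i => all (fun j => cmeq (cbrM (nth cmzero rl i) (nth cmzero rl j)) (combM i j)) (iota 0 17)) (iota 0 17).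

Lemma chkP_true : chkP. Proof. vm_compute. reflexivity. Qed.
Lemma chkM_true : chkM. Proof. vm_compute. reflexivity. Qed.

Section Link.
Variables (C : numClosedFieldType) (alpha : C).

Lemma setbF : setb bF = set0.
Proof. by apply/setP => -[[|[|[|[|i]]]] hi]; rewrite !inE. Qed.

Lemma setb1 (j : nat) (s : B4) : (j < 4)%N -> (forall i : 'I_4, bsel s i = (val i == j)) ->
  setb s = [set (inord j : 'I_4)].
Proof.
move=> hj h; apply/setP => i; rewrite !inE h.
by rewrite -(inj_eq val_inj) /= inordK.
Qed.

Lemma ptp_den a : ptp a = pden alpha (cptp a).
Proof. by rewrite /cptp pden1 /pemb /= setbF. Qed.
Lemma ptau_den : ptau = pden alpha cptau.
Proof. by rewrite /cptau pden1 /pemb /= setbF. Qed.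
Lemma pxi1_den : pxi1 = pden alpha cx1.
Proof. by rewrite /cx1 pden1 /pemb /= (@setb1 0) // => -[[|[|[|[|i]]]] hi]. Qed.
Lemma pxi2_den : pxi2 = pden alpha cx2.
Proof. by rewrite /cx2 pden1 /pemb /= (@setb1 1) // => -[[|[|[|[|i]]]] hi]. Qed.
Lemma peta1_den : peta1 = pden alpha ce1.
Proof. by rewrite /ce1 pden1 /pemb /= (@setb1 2) // => -[[|[|[|[|i]]]] hi]. Qed.
Lemma peta2_den : peta2 = pden alpha ce2.
Proof. by rewrite /ce2 pden1 /pemb /= (@setb1 3) // => -[[|[|[|[|i]]]] hi]. Qed.

Lemma ev_qal : ev alpha qal = alpha.
Proof. by rewrite /qal /= rmorph0 rmorph1 mulr0 addr0 mulr1 add0r. Qed.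
Lemma ev_q2al : ev alpha q2al = 2 * alpha.
Proof. by rewrite /q2al /= rmorph0 rmorph_nat mulr0 addr0 add0r mulrC. Qed.
Lemma ev_qh : ev alpha qh = (1 + alpha) / 2.
Proof.
rewrite /qh /fr /= mulr0 addr0 rmorphM rmorph1 fmorphV rmorph_nat mul1r.
by rewrite mulrDl mul1r mulrC.
Qed.

Lemma pscale_al l : alpha *: pden alpha l = pden alpha (cscale qal l).
Proof. by rewrite pden_cscale ev_qal. Qed.
Lemma pscale_2al l : (2 * alpha) *: pden alpha l = pden alpha (cscale q2al l).
Proof. by rewrite pden_cscale ev_q2al. Qed.
Lemma wscale_al l : alpha *: wden alpha l = wden alpha (cscale qal l).
Proof. by rewrite wden_cscale ev_qal. Qed.
Lemma wscale_h l : ((1 + alpha) / 2) *: wden alpha l = wden alpha (cscale qh l).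
Proof. by rewrite wden_cscale ev_qh. Qed.

Lemma pden_add A B : pden alpha A + pden alpha B = pden alpha (A ++ B).
Proof. by rewrite pden_cat. Qed.
Lemma pden_sub A B : pden alpha A - pden alpha B = pden alpha (A ++ cneg B).
Proof. by rewrite pden_cat pden_cneg. Qed.

Lemma gam_list_den : gam_list alpha = map (pden alpha) gl.
Proof.
rewrite /gam_list.
rewrite !ptp_den ptau_den pxi1_den pxi2_den peta1_den peta2_den.
rewrite !pmul_den pscale_2al !pscale_al !pden_sub !pden_add.
by [].
Qed.

Lemma wden_add A B : wden alpha A + wden alpha B = wden alpha (A ++ B).
Proof. by rewrite wden_cat. Qed.
Lemma mden_add' X Y : mden alpha X + mden alpha Y = mden alpha (cmadd X Y).
Proof. by rewrite mden_add. Qed.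
Lemma mden_neg' X : - mden alpha X = mden alpha (cmneg X).
Proof. by rewrite mden_neg. Qed.

Lemma rho_list_den : rho_list alpha = map (mden alpha) rl.
Proof.
rewrite /rho_list /w1 /wt /wtinv /wd !(wmon_den alpha).
rewrite !wmul_den !wscale_al wscale_h !wden_add.
rewrite !Ekl_den !Idw_den !mden_neg' !mden_add'.
by [].
Qed.
End Link.

Definition mscale (C : numClosedFieldType) (a : C) (X : SM C) : SM C :=
  \matrix_(i, j) (a *: X i j).

Section MS.
Variable C : numClosedFieldType.
Lemma mscaleA (a b : C) (X : SM C) : mscale a (mscale b X) = mscale (a * b) X.
Proof. by apply/matrixP => i j; rewrite !mxE scalerA. Qed.
Lemma mscale1 (X : SM C) : mscale 1 X = X.
Proof. by apply/matrixP => i j; rewrite !mxE scale1r. Qed.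
Lemma mscaleDr (a : C) : {morph mscale a : X Y / X + Y}.
Proof. by move=> X Y; apply/matrixP => i j; rewrite !mxE scalerDr. Qed.
Lemma mscaleDl (X : SM C) : {morph (fun a : C => mscale a X) : a b / a + b}.
Proof. by move=> a b; apply/matrixP => i j; rewrite !mxE scalerDl. Qed.
End MS.

Definition SMl (C : numClosedFieldType) := matrix (W C) 4 4.
HB.instance Definition _ (C : numClosedFieldType) := GRing.Zmodule.on (SMl C).
HB.instance Definition _ (C : numClosedFieldType) :=
  GRing.Zmodule_isLmodule.Build C (SMl C) (@mscaleA C) (@mscale1 C) (@mscaleDr C) (@mscaleDl C).

Section T.
Variable C : numClosedFieldType.
Lemma test (a : C) (X Y : SMl C) : a *: (X + Y) = a *: X + a *: Y.
Proof. by rewrite scalerDr. Qed.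
Lemma test2 (a : C) (X : SMl C) i j : (a *: X) i j = a *: X i j.
Proof. by rewrite mxE. Qed.
Lemma test3 (X Y : SM C) : (X + Y : SMl C) = X + Y.
Proof. by []. Qed.
End T.

Section Lin.
Variable C : numClosedFieldType.

Definition islin (U V : lmodType C) (f : U -> V) :=
  forall a x y, f (a *: x + y) = a *: f x + f y.

Section Gen.
Variables (U V Z : lmodType C).

Lemma islin0 (f : U -> V) : islin f -> f 0 = 0.
Proof.
move=> h; have := h 1 0 0; rewrite scaler0 addr0 scale1r => E.
rewrite [in RHS](_ : 0 = f 0 - f 0); last by rewrite subrr.
by rewrite {2}E addrK.
Qed.

Lemma islinD (f g : U -> V) : islin f -> islin g -> islin (fun x => f x + g x).
Proof. by move=> hf hg a x y; rewrite hf hg scalerDr addrACA. Qed.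
Lemma islinN (f : U -> V) : islin f -> islin (fun x => - f x).
Proof. by move=> hf a x y; rewrite hf opprD scalerN. Qed.
Lemma islinB (f g : U -> V) : islin f -> islin g -> islin (fun x => f x - g x).
Proof. by move=> hf hg; apply: islinD => //; apply: islinN. Qed.
Lemma islinZ (s : C) (f : U -> V) : islin f -> islin (fun x => s *: f x).
Proof. by move=> hf a x y; rewrite hf scalerDr !scalerA mulrC. Qed.
Lemma islinMz (s : int) (f : U -> V) : islin f -> islin (fun x => f x *~ s).
Proof. by move=> hf a x y; rewrite hf mulrzDl scalerMzr. Qed.
Lemma islin_comp (f : V -> Z) (g : U -> V) : islin f -> islin g -> islin (fun x => f (g x)).
Proof. by move=> hf hg a x y; rewrite hg hf. Qed.
Lemma islin_sum (I : Type) (r : seq I) (F : I -> U -> V) :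
  (forall i, islin (F i)) -> islin (fun x => \sum_(i <- r) F i x).
Proof.
move=> h a x y; rewrite scaler_sumr -big_split /=.
by apply: eq_bigr => i _; rewrite h.
Qed.
Lemma islin_id : islin (fun x : U => x).
Proof. by []. Qed.

Lemma islin_combo (f : U -> V) (n : nat) (c : 'I_n -> C) (X : 'I_n -> U) :
  islin f -> f (\sum_i c i *: X i) = \sum_i c i *: f (X i).
Proof.
move=> h; apply: (big_rec2 (fun a b => f a = b)); first exact: islin0.
by move=> i y1 y2 _ <-; rewrite h.
Qed.
End Gen.

Lemma islin_lin1 (K : choiceType) (V : lmodType C) (f : K -> V) :
  islin (lin1 f : {malg C[K]} -> V).
Proof. by move=> a x y; rewrite lin1D lin1Z. Qed.

Lemma lin1_fun (K : choiceType) (V : lmodType C) (g1 g2 : K -> V) a (x : {malg C[K]}) :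
  lin1 (fun u => a *: g1 u + g2 u) x = a *: lin1 g1 x + lin1 g2 x.
Proof.
rewrite /lin1 scaler_sumr -big_split /=; apply: eq_bigr => u _.
by rewrite scalerDr !scalerA mulrC.
Qed.

Lemma eq_lin1 (K : choiceType) (V : lmodType C) (g h : K -> V) (x : {malg C[K]}) :
  (forall u, g u = h u) -> lin1 g x = lin1 h x.
Proof. by move=> e; rewrite /lin1; apply: eq_bigr => u _; rewrite e. Qed.

Lemma islin_bilin_l (K : choiceType) (V : lmodType C) (f : K -> K -> V) y :
  islin (fun x : {malg C[K]} => bilin f x y).
Proof. by move=> a x x'; rewrite !bilin_lin lin1D lin1Z. Qed.

Lemma islin_bilin_r (K : choiceType) (V : lmodType C) (f : K -> K -> V) x :
  islin (fun y : {malg C[K]} => bilin f x y).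
Proof.
move=> a y y'; rewrite !bilin_lin -lin1_fun; apply: eq_lin1 => u.
by rewrite lin1D lin1Z.
Qed.
End Lin.

Section LinP.
Variable C : numClosedFieldType.
Local Notation islin := (@islin C).

Lemma L_pmul_l (y : P C) : islin (fun x : P C => pmul x y).
Proof. exact: islin_bilin_l. Qed.
Lemma L_pmul_r (x : P C) : islin (fun y : P C => pmul x y).
Proof. exact: islin_bilin_r. Qed.
Lemma L_pdt : islin (@pdt C). Proof. exact: islin_lin1. Qed.
Lemma L_pdtau : islin (@pdtau C). Proof. exact: islin_lin1. Qed.
Lemma L_pdth j : islin (@pdth C j). Proof. exact: islin_lin1. Qed.
Lemma L_ppart b : islin (@ppart C b). Proof. exact: islin_lin1. Qed.

Lemma L_pbrh_l p (B : P C) : islin (fun A : P C => pbr_hom p A B).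
Proof.
rewrite /pbr_hom; apply: islinD; first apply: islinB.
- exact: (islin_comp (L_pmul_l _) L_pdtau).
- exact: (islin_comp (L_pmul_l _) L_pdt).
apply: islinZ; apply: islin_sum => i; apply: islinD.
- exact: (islin_comp (L_pmul_l _) (L_pdth _)).
- exact: (islin_comp (L_pmul_l _) (L_pdth _)).
Qed.

Lemma L_pbrh_r p (A : P C) : islin (fun B : P C => pbr_hom p A B).
Proof.
rewrite /pbr_hom; apply: islinD; first apply: islinB.
- exact: (islin_comp (L_pmul_r _) L_pdt).
- exact: (islin_comp (L_pmul_r _) L_pdtau).
apply: islinZ; apply: islin_sum => i; apply: islinD.
- exact: (islin_comp (L_pmul_r _) (L_pdth _)).
- exact: (islin_comp (L_pmul_r _) (L_pdth _)).
Qed.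

Lemma L_pbr_l (B : P C) : islin (fun A : P C => pbr A B).
Proof.
rewrite /pbr; apply: islinD.
- exact: (islin_comp (L_pbrh_l _ _) (L_ppart _)).
- exact: (islin_comp (L_pbrh_l _ _) (L_ppart _)).
Qed.

Lemma L_pbr_r (A : P C) : islin (fun B : P C => pbr A B).
Proof. by rewrite /pbr; apply: islinD; apply: L_pbrh_r. Qed.
End LinP.

Section LinM.
Variable C : numClosedFieldType.
Local Notation islin := (@islin C).

Lemma L_wmul_l (y : W C) : islin (fun x : W C => wmul x y).
Proof. exact: islin_bilin_l. Qed.
Lemma L_wmul_r (x : W C) : islin (fun y : W C => wmul x y).
Proof. exact: islin_bilin_r. Qed.

Lemma L_smpart b : islin (fun X : SMl C => (smpart b X : SMl C)).
Proof.
move=> a X Y; apply/matrixP => i j; rewrite !mxE.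
by case: ifP => _; rewrite ?scaler0 ?addr0.
Qed.

Lemma L_smmul_l (Y : SM C) : islin (fun X : SMl C => (smmul X Y : SMl C)).
Proof.
move=> a X X'; apply/matrixP => i j; rewrite !mxE scaler_sumr -big_split /=.
by apply: eq_bigr => k _; rewrite !mxE L_wmul_l.
Qed.

Lemma L_smmul_r (X : SM C) : islin (fun Y : SMl C => (smmul X Y : SMl C)).
Proof.
move=> a Y Y'; apply/matrixP => i j; rewrite !mxE scaler_sumr -big_split /=.
by apply: eq_bigr => k _; rewrite !mxE L_wmul_r.
Qed.

Lemma L_smbr_l (Y : SM C) : islin (fun X : SMl C => (smbr X Y : SMl C)).
Proof.
rewrite /smbr; apply: islin_sum => b; apply: islin_sum => c; apply: islinB.
- exact: (islin_comp (L_smmul_l _) (L_smpart _)).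
- apply: islinMz; exact: (islin_comp (L_smmul_r _) (L_smpart _)).
Qed.

Lemma L_smbr_r (X : SM C) : islin (fun Y : SMl C => (smbr X Y : SMl C)).
Proof.
rewrite /smbr; apply: islin_sum => b; apply: islin_sum => c; apply: islinB.
- exact: (islin_comp (L_smmul_r _) (L_smpart _)).
- apply: islinMz; exact: (islin_comp (L_smmul_l _) (L_smpart _)).
Qed.
End LinM.

Definition chkPar : bool :=
  all (fun i => ceq (clin (cpp (9 <= i)%N) (nth [::] gl i)) (nth [::] gl i)) (iota 0 17).
Definition chkParM : bool :=
  all (fun i => cmeq (cmpart (9 <= i)%N (nth cmzero rl i)) (nth cmzero rl i)) (iota 0 17).
Lemma chkPar_true : chkPar. Proof. vm_compute. reflexivity. Qed.
Lemma chkParM_true : chkParM. Proof. vm_compute. reflexivity. Qed.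

Section Main.
Variables (C : numClosedFieldType) (alpha : C).

Lemma gam_den (i : 'I_17) : gam alpha i = pden alpha (nth [::] gl i).
Proof. by rewrite /gam gam_list_den (nth_map [::]). Qed.

Lemma rho_den (i : 'I_17) : rho alpha i = mden alpha (nth cmzero rl i).
Proof. by rewrite /rho rho_list_den (nth_map cmzero). Qed.

Lemma in_iota17 (i : 'I_17) : ((i : nat) \in iota 0 17).
Proof. by rewrite mem_iota ltn_ord. Qed.

Lemma sum_iota17 (V : zmodType) (F : nat -> V) :
  \sum_(k <- iota 0 17) F k = \sum_(k < 17) F k.
Proof. by rewrite -(big_mkord (fun _ => true) F). Qed.

Lemma pbr_pair (i j : 'I_17) :
  pbr (gam alpha i) (gam alpha j) = \sum_(k < 17) ev alpha (tabk i j k) *: gam alpha k.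
Proof.
rewrite !gam_den pbr_den /pden.
have := chkP_true; move/allP => /(_ _ (in_iota17 i)) /allP /(_ _ (in_iota17 j)).
move/(den_ceq alpha pemb) => ->.
rewrite /combP den_flatten big_map sum_iota17.
by apply: eq_bigr => k _; rewrite den_cscale gam_den.
Qed.

Lemma smbr_pair (i j : 'I_17) :
  (smbr (rho alpha i) (rho alpha j) : SMl C) = \sum_(k < 17) ev alpha (tabk i j k) *: (rho alpha k : SMl C).
Proof.
rewrite !rho_den smbr_den.
have := chkM_true; move/allP => /(_ _ (in_iota17 i)) /allP /(_ _ (in_iota17 j)).
move/(cmeq_den alpha) => ->.
apply/matrixP => r s; rewrite summxE !mxE /combM /wden den_flatten big_map sum_iota17.
by apply: eq_bigr => k _; rewrite den_cscale !mxE rho_den mxE.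
Qed.

Lemma recombine (V : lmodType C) (G : 'I_17 -> V) (c1 c2 : 'I_17 -> C)
  (t : 'I_17 -> 'I_17 -> 'I_17 -> C) :
  \sum_i c1 i *: (\sum_j c2 j *: (\sum_k t i j k *: G k))
  = \sum_k (\sum_i \sum_j c1 i * c2 j * t i j k) *: G k.
Proof.
under [RHS]eq_bigr do rewrite scaler_suml.
rewrite exchange_big; apply: eq_bigr => i _; rewrite scaler_sumr.
under [RHS]eq_bigr do rewrite scaler_suml.
rewrite exchange_big; apply: eq_bigr => j _; rewrite scaler_sumr scaler_sumr.
by apply: eq_bigr => k _; rewrite !scalerA.
Qed.

Lemma rhoc_sum (c : 'I_17 -> C) : (rhoc alpha c : SMl C) = \sum_i c i *: (rho alpha i : SMl C).
Proof.
apply/matrixP => k l; rewrite summxE !mxE.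
by apply: eq_bigr => i _; rewrite mxE.
Qed.

End Main.

Definition coefq {K : eqType} (l : FS K) (k : K) : Q :=
  foldr (fun x acc => if x.2 == k then qadd x.1 acc else acc) [::] l.

Definition tvec (vs : seq Q) (i i' : nat) (s r : Q) : bool :=
  all (fun j => if j == i then qzero (qadd (nth [::] vs j) (qopp s))
                else if j == i' then qzero (qadd (nth [::] vs j) (qopp r))
                else qzero (nth [::] vs j)) (iota 0 17).

Lemma setb_inj : injective setb.
Proof.
move=> s s' e.
have h (i : 'I_4) : bsel s i = bsel s' i by rewrite -!in_setb e.
move: (h (@Ordinal 4 0 isT)) (h (@Ordinal 4 1 isT)) (h (@Ordinal 4 2 isT)) (h (@Ordinal 4 3 isT)).
clear h e; by case: s s' => [[[a0 a1] a2] a3] [[[b0 b1] b2] b3] /= -> -> -> ->.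
Qed.

Lemma pemb_inj : injective pemb.
Proof.
move=> [[a m] s] [[a' m'] s'] [e1 e2 /setb_inj e3].
by rewrite e1 e2 e3.
Qed.

Section Ext.
Variables (C : numClosedFieldType) (alpha : C).

Lemma den_coef (K : eqType) (K' : choiceType) (emb : K -> K') (inj : injective emb) l k :
  (den alpha emb l)@_(emb k) = ev alpha (coefq l k).
Proof.
elim: l => [|x l IH]; first by rewrite den_nil mcoeff0.
rewrite den_cons mcoeffD mcoeffZ mcoeffU (inj_eq inj) IH /=.
by case: eqP => _; rewrite ?mulr1n ?mulr0n ?mulr1 ?mulr0 ?add0r // ev_qadd.
Qed.

Lemma tvec_sum (c : 'I_17 -> C) vs (i i' : nat) (hi : (i < 17)%N) (hi' : (i' < 17)%N) s r :
  i != i' -> tvec vs i i' s r ->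
  \sum_(j < 17) c j * ev alpha (nth [::] vs j) = c (inord i) * ev alpha s + c (inord i') * ev alpha r.
Proof.
move=> nii' /allP h.
have nii2 : i' != i by rewrite eq_sym.
have ev_eq (p q : Q) : qzero (qadd p (qopp q)) -> ev alpha p = ev alpha q.
  by move/(ev_qzero alpha); rewrite ev_qadd ev_qopp => /eqP; rewrite subr_eq0 => /eqP.
have hne : inord i != inord i' :> 'I_17 by rewrite -(inj_eq val_inj) /= !inordK.
rewrite (bigD1 (inord i)) //= (bigD1 (inord i')) /=; last by rewrite eq_sym.
rewrite big1 ?addr0 => [|j]; last first.
  rewrite ?andTb => /andP[ji ji'].
  have := h j; rewrite mem_iota /= ltn_ord => /(_ isT).
  have -> : (j == i :> nat) = false by apply/eqP => e; move: ji; rewrite -e inord_val eqxx.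
  have -> : (j == i' :> nat) = false by apply/eqP => e; move: ji'; rewrite -e inord_val eqxx.
  by move/(ev_qzero alpha) ->; rewrite mulr0.
congr (_ * _ + _ * _).
  have := h i; rewrite mem_iota /= hi eqxx => /(_ isT) /ev_eq.
  by rewrite inordK.
have := h i'; rewrite mem_iota /= hi' eqxx (negbTE nii2) => /(_ isT) /ev_eq.
by rewrite inordK.
Qed.

Lemma gam_ext (c : 'I_17 -> C) (i i' : nat) s r K (hi : (i < 17)%N) (hi' : (i' < 17)%N) :
  i != i' -> tvec [seq coefq g K | g <- gl] i i' s r ->
  (gamma alpha c)@_(pemb K) = c (inord i) * ev alpha s + c (inord i') * ev alpha r.
Proof.
move=> nii' ht; rewrite -(tvec_sum c hi hi' nii' ht) /gamma (big_morph (mcoeff (pemb K)) (@mcoeffD _ _ _) (mcoeff0 _)).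
apply: eq_bigr => j _; rewrite mcoeffZ gam_den /pden den_coef ?(nth_map [::]) //.
exact: pemb_inj.
Qed.

Lemma rho_ext (c : 'I_17 -> C) (i i' : nat) s r (k l : 'I_4) K (hi : (i < 17)%N) (hi' : (i' < 17)%N) :
  i != i' -> tvec [seq coefq (X (k : nat) (l : nat)) K | X <- rl] i i' s r ->
  (rhoc alpha c k l)@_K = c (inord i) * ev alpha s + c (inord i') * ev alpha r.
Proof.
move=> nii' ht; rewrite -(tvec_sum c hi hi' nii' ht) mxE (big_morph (mcoeff K) (@mcoeffD _ _ _) (mcoeff0 _)).
apply: eq_bigr => j _; rewrite mcoeffZ rho_den mxE /wden.
rewrite (@den_coef _ _ (fun k : WK => k)) ?(nth_map cmzero) //.
Qed.
End Ext.

Definition bs (a b c d : bool) : B4 := (a, b, c, d).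

Lemma ord17_cases (P : 'I_17 -> Prop) :
  (forall k (hk : (k < 17)%N), P (inord k) ) -> forall i, P i.
Proof. by move=> h i; rewrite -[i]inord_val; apply: h. Qed.

Section Final.
Variables (C : numClosedFieldType) (alpha : C).

Lemma ev_one : ev alpha [:: 1] = 1. Proof. by rewrite ev1 rmorph1. Qed.
Lemma ev_m1 : ev alpha [:: -1] = -1. Proof. by rewrite ev1 rmorphN rmorph1. Qed.

Lemma part1 (c : 'I_17 -> C) : gamma alpha c = 0 -> forall i, c i = 0.
Proof.
move=> Hc.
have E (i i' : nat) s r K (hi : (i < 17)%N) (hi' : (i' < 17)%N) :
    i != i' -> tvec [seq coefq g K | g <- gl] i i' s r ->
    c (inord i) * ev alpha s + c (inord i') * ev alpha r = 0.
  by move=> h1 h2; rewrite -(gam_ext alpha c hi hi' h1 h2) Hc mcoeff0.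
have U (i i' : nat) K (hi : (i < 17)%N) (hi' : (i' < 17)%N) :
    i != i' -> tvec [seq coefq g K | g <- gl] i i' [:: 1] [::] -> c (inord i) = 0.
  by move=> h1 h2; have := E _ _ _ _ _ hi hi' h1 h2; rewrite ev_one ev_nil mulr1 mulr0 addr0.
have c0 := U 0 1 (2, 0%N, bs false false false false) isT isT isT ltac:(vm_compute; reflexivity).
have c1 := U 1 0 (0, 2%N, bs false false false false) isT isT isT ltac:(vm_compute; reflexivity).
have c2 := U 2 0 (1, 1%N, bs false false false false) isT isT isT ltac:(vm_compute; reflexivity).
have c3 := U 3 0 (0, 0%N, bs true true false false) isT isT isT ltac:(vm_compute; reflexivity).
have c4 := U 4 0 (0, 0%N, bs false false true true) isT isT isT ltac:(vm_compute; reflexivity).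
have c6 := U 6 0 (0, 0%N, bs true false false true) isT isT isT ltac:(vm_compute; reflexivity).
have c7 := U 7 0 (0, 0%N, bs false true true false) isT isT isT ltac:(vm_compute; reflexivity).
have c9 := U 9 0 (1, 0%N, bs false false true false) isT isT isT ltac:(vm_compute; reflexivity).
have c10 := U 10 0 (1, 0%N, bs false false false true) isT isT isT ltac:(vm_compute; reflexivity).
have c11 := U 11 0 (1, 0%N, bs true false false false) isT isT isT ltac:(vm_compute; reflexivity).
have c12 := U 12 0 (1, 0%N, bs false true false false) isT isT isT ltac:(vm_compute; reflexivity).
have c13 := U 13 0 (0, 1%N, bs true false false false) isT isT isT ltac:(vm_compute; reflexivity).
have c14 := U 14 0 (0, 1%N, bs false true false false) isT isT isT ltac:(vm_compute; reflexivity).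
have c15 := U 15 0 (0, 1%N, bs false false true false) isT isT isT ltac:(vm_compute; reflexivity).
have c16 := U 16 0 (0, 1%N, bs false false false true) isT isT isT ltac:(vm_compute; reflexivity).
have e58 := E 5 8 [:: 1] [:: 1] (0, 0%N, bs true false true false) isT isT isT ltac:(vm_compute; reflexivity).
have f58 := E 5 8 [:: 1] [:: -1] (0, 0%N, bs false true false true) isT isT isT ltac:(vm_compute; reflexivity).
rewrite ev_one ev_m1 !mulr1 mulrN1 in e58 f58.
have c5 : c (inord 5%N) = 0.
  have : (c (inord 5%N) + c (inord 8%N)) + (c (inord 5%N) - c (inord 8%N)) = 0.
    by rewrite e58 f58 addr0.
  rewrite addrACA subrr addr0 -mulr2n => /eqP; rewrite mulrn_eq0 /= => /eqP //.
have c8 : c (inord 8%N) = 0 by move: e58; rewrite c5 add0r.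
apply: ord17_cases => k hk.
do 17 (case: k hk => [|k] hk; first by []).
by [].
Qed.

Lemma part4 (c1 c2 : 'I_17 -> C) : rhoc alpha c1 = rhoc alpha c2 -> forall i, c1 i = c2 i.
Proof.
move=> Heq.
pose d := fun i => c1 i - c2 i.
have Hd (k l : 'I_4) K : (rhoc alpha d k l)@_K = 0.
  have -> : rhoc alpha d k l = rhoc alpha c1 k l - rhoc alpha c2 k l.
    by rewrite !mxE -sumrB; apply: eq_bigr => i _; rewrite scalerBl.
  by rewrite Heq subrr mcoeff0.
have E (i i' : nat) s r (k l : 'I_4) K (hi : (i < 17)%N) (hi' : (i' < 17)%N) :
    i != i' -> tvec [seq coefq (X (k : nat) (l : nat)) K | X <- rl] i i' s r ->
    d (inord i) * ev alpha s + d (inord i') * ev alpha r = 0.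
  by move=> h1 h2; rewrite -(rho_ext alpha d hi hi' h1 h2) Hd.
have d0 := E 0 1 [:: 1] [::] (@Ordinal 4 0 isT) (@Ordinal 4 0 isT) ((2:int), 0%N) isT isT isT ltac:(vm_compute; reflexivity).
rewrite ?ev_one ?ev_m1 ev_nil mulr0 addr0 ?mulr1 ?mulrN1 ?oppr_eq0 in d0; move/eqP: d0; rewrite ?oppr_eq0 => /eqP d0.
have d1 := E 1 0 [:: 1] [::] (@Ordinal 4 0 isT) (@Ordinal 4 0 isT) ((0:int), 2%N) isT isT isT ltac:(vm_compute; reflexivity).
rewrite ?ev_one ?ev_m1 ev_nil mulr0 addr0 ?mulr1 ?mulrN1 ?oppr_eq0 in d1; move/eqP: d1; rewrite ?oppr_eq0 => /eqP d1.
have d2 := E 2 0 [:: 1] [::] (@Ordinal 4 0 isT) (@Ordinal 4 0 isT) ((1:int), 1%N) isT isT isT ltac:(vm_compute; reflexivity).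
rewrite ?ev_one ?ev_m1 ev_nil mulr0 addr0 ?mulr1 ?mulrN1 ?oppr_eq0 in d2; move/eqP: d2; rewrite ?oppr_eq0 => /eqP d2.
have d3 := E 3 0 [:: 1] [::] (@Ordinal 4 1 isT) (@Ordinal 4 0 isT) ((0:int), 0%N) isT isT isT ltac:(vm_compute; reflexivity).
rewrite ?ev_one ?ev_m1 ev_nil mulr0 addr0 ?mulr1 ?mulrN1 ?oppr_eq0 in d3; move/eqP: d3; rewrite ?oppr_eq0 => /eqP d3.
have d4 := E 4 0 [:: -1] [::] (@Ordinal 4 0 isT) (@Ordinal 4 1 isT) ((0:int), 0%N) isT isT isT ltac:(vm_compute; reflexivity).
rewrite ?ev_one ?ev_m1 ev_nil mulr0 addr0 ?mulr1 ?mulrN1 ?oppr_eq0 in d4; move/eqP: d4; rewrite ?oppr_eq0 => /eqP d4.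
have d6 := E 6 0 [:: 1] [::] (@Ordinal 4 2 isT) (@Ordinal 4 3 isT) ((0:int), 0%N) isT isT isT ltac:(vm_compute; reflexivity).
rewrite ?ev_one ?ev_m1 ev_nil mulr0 addr0 ?mulr1 ?mulrN1 ?oppr_eq0 in d6; move/eqP: d6; rewrite ?oppr_eq0 => /eqP d6.
have d7 := E 7 0 [:: 1] [::] (@Ordinal 4 3 isT) (@Ordinal 4 2 isT) ((0:int), 0%N) isT isT isT ltac:(vm_compute; reflexivity).
rewrite ?ev_one ?ev_m1 ev_nil mulr0 addr0 ?mulr1 ?mulrN1 ?oppr_eq0 in d7; move/eqP: d7; rewrite ?oppr_eq0 => /eqP d7.
have d9 := E 9 0 [:: 1] [::] (@Ordinal 4 0 isT) (@Ordinal 4 2 isT) ((1:int), 0%N) isT isT isT ltac:(vm_compute; reflexivity).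
rewrite ?ev_one ?ev_m1 ev_nil mulr0 addr0 ?mulr1 ?mulrN1 ?oppr_eq0 in d9; move/eqP: d9; rewrite ?oppr_eq0 => /eqP d9.
have d15 := E 15 0 [:: 1] [::] (@Ordinal 4 0 isT) (@Ordinal 4 2 isT) ((0:int), 1%N) isT isT isT ltac:(vm_compute; reflexivity).
rewrite ?ev_one ?ev_m1 ev_nil mulr0 addr0 ?mulr1 ?mulrN1 ?oppr_eq0 in d15; move/eqP: d15; rewrite ?oppr_eq0 => /eqP d15.
have d10 := E 10 0 [:: 1] [::] (@Ordinal 4 0 isT) (@Ordinal 4 3 isT) ((1:int), 0%N) isT isT isT ltac:(vm_compute; reflexivity).
rewrite ?ev_one ?ev_m1 ev_nil mulr0 addr0 ?mulr1 ?mulrN1 ?oppr_eq0 in d10; move/eqP: d10; rewrite ?oppr_eq0 => /eqP d10.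
have d16 := E 16 0 [:: 1] [::] (@Ordinal 4 0 isT) (@Ordinal 4 3 isT) ((0:int), 1%N) isT isT isT ltac:(vm_compute; reflexivity).
rewrite ?ev_one ?ev_m1 ev_nil mulr0 addr0 ?mulr1 ?mulrN1 ?oppr_eq0 in d16; move/eqP: d16; rewrite ?oppr_eq0 => /eqP d16.
have d11 := E 11 0 [:: 1] [::] (@Ordinal 4 1 isT) (@Ordinal 4 3 isT) ((1:int), 0%N) isT isT isT ltac:(vm_compute; reflexivity).
rewrite ?ev_one ?ev_m1 ev_nil mulr0 addr0 ?mulr1 ?mulrN1 ?oppr_eq0 in d11; move/eqP: d11; rewrite ?oppr_eq0 => /eqP d11.
have d13 := E 13 0 [:: 1] [::] (@Ordinal 4 1 isT) (@Ordinal 4 3 isT) ((0:int), 1%N) isT isT isT ltac:(vm_compute; reflexivity).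
rewrite ?ev_one ?ev_m1 ev_nil mulr0 addr0 ?mulr1 ?mulrN1 ?oppr_eq0 in d13; move/eqP: d13; rewrite ?oppr_eq0 => /eqP d13.
have d12 := E 12 0 [:: -1] [::] (@Ordinal 4 1 isT) (@Ordinal 4 2 isT) ((1:int), 0%N) isT isT isT ltac:(vm_compute; reflexivity).
rewrite ?ev_one ?ev_m1 ev_nil mulr0 addr0 ?mulr1 ?mulrN1 ?oppr_eq0 in d12; move/eqP: d12; rewrite ?oppr_eq0 => /eqP d12.
have d14 := E 14 0 [:: -1] [::] (@Ordinal 4 1 isT) (@Ordinal 4 2 isT) ((0:int), 1%N) isT isT isT ltac:(vm_compute; reflexivity).
rewrite ?ev_one ?ev_m1 ev_nil mulr0 addr0 ?mulr1 ?mulrN1 ?oppr_eq0 in d14; move/eqP: d14; rewrite ?oppr_eq0 => /eqP d14.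
have d5 := E 5 2 [:: 1] qh (@Ordinal 4 1 isT) (@Ordinal 4 1 isT) ((0:int), 0%N) isT isT isT ltac:(vm_compute; reflexivity).
have d8 := E 8 2 [:: 1] qh (@Ordinal 4 2 isT) (@Ordinal 4 2 isT) ((0:int), 0%N) isT isT isT ltac:(vm_compute; reflexivity).
rewrite d2 mul0r addr0 ev_one mulr1 in d5.
rewrite d2 mul0r addr0 ev_one mulr1 in d8.
apply: ord17_cases => k hk; apply/eqP; rewrite -subr_eq0; apply/eqP.
change (d (inord k) = 0).
do 17 (case: k hk => [|k] hk; first by []).
by [].
Qed.


Lemma part2 (i : 'I_17) : ppart (gpar i) (gam alpha i) = gam alpha i
                     /\ smpart (gpar i) (rho alpha i) = rho alpha i.
Proof.
split.
  rewrite gam_den ppart_den /pden; apply: den_ceq.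
  by have := chkPar_true; move/allP => /(_ _ (in_iota17 i)).
rewrite rho_den smpart_den; apply: cmeq_den.
by have := chkParM_true; move/allP => /(_ _ (in_iota17 i)).
Qed.

Lemma part3 (c1 c2 : 'I_17 -> C) : exists c3 : 'I_17 -> C,
        pbr (gamma alpha c1) (gamma alpha c2) = gamma alpha c3
        /\ smbr (rhoc alpha c1) (rhoc alpha c2) = rhoc alpha c3.
Proof.
exists (fun k => \sum_i \sum_j c1 i * c2 j * ev alpha (tabk i j k)); split.
  rewrite /gamma.
  have h1 : pbr (\sum_i c1 i *: gam alpha i) (\sum_j c2 j *: gam alpha j)
          = \sum_i c1 i *: pbr (gam alpha i) (\sum_j c2 j *: gam alpha j)
    := islin_combo c1 (gam alpha) (L_pbr_l (\sum_j c2 j *: gam alpha j)).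
  have h2 i : pbr (gam alpha i) (\sum_j c2 j *: gam alpha j)
          = \sum_j c2 j *: pbr (gam alpha i) (gam alpha j)
    := islin_combo c2 (gam alpha) (L_pbr_r (gam alpha i)).
  rewrite h1.
  transitivity (\sum_i c1 i *: (\sum_j c2 j *: (\sum_(k < 17) ev alpha (tabk i j k) *: gam alpha k))).
    apply: eq_bigr => i _; rewrite h2; apply: (congr1 (fun v => c1 i *: v)).
    by apply: eq_bigr => j _; rewrite pbr_pair.
  exact: (recombine (gam alpha) c1 c2 (fun i j k => ev alpha (tabk i j k))).
rewrite !rhoc_sum.
have h1 : (smbr (\sum_i c1 i *: (rho alpha i : SMl C)) (\sum_j c2 j *: (rho alpha j : SMl C)) : SMl C)
        = \sum_i c1 i *: (smbr (rho alpha i) (\sum_j c2 j *: (rho alpha j : SMl C)) : SMl C)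
  := islin_combo c1 (fun i => rho alpha i : SMl C) (L_smbr_l (\sum_j c2 j *: (rho alpha j : SMl C))).
have h2 i : (smbr (rho alpha i) (\sum_j c2 j *: (rho alpha j : SMl C)) : SMl C)
        = \sum_j c2 j *: (smbr (rho alpha i) (rho alpha j) : SMl C)
  := islin_combo c2 (fun j => rho alpha j : SMl C) (L_smbr_r (rho alpha i)).
rewrite h1.
transitivity (\sum_i c1 i *: (\sum_j c2 j *: (\sum_(k < 17) ev alpha (tabk i j k) *: (rho alpha k : SMl C)))).
  apply: eq_bigr => i _; rewrite h2; apply: (congr1 (fun v : SMl C => c1 i *: v)).
  by apply: eq_bigr => j _; rewrite smbr_pair.
exact: (recombine (fun k => rho alpha k : SMl C) c1 c2 (fun i j k => ev alpha (tabk i j k))).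
Qed.

End Final.

Theorem theorem3p1 (C : numClosedFieldType) (alpha : C) :
  (forall c : 'I_17 -> C, gamma alpha c = 0 -> forall i, c i = 0)
  /\ (forall i : 'I_17, ppart (gpar i) (gam alpha i) = gam alpha i
                     /\ smpart (gpar i) (rho alpha i) = rho alpha i)
  /\ (forall c1 c2 : 'I_17 -> C, exists c3 : 'I_17 -> C,
        pbr (gamma alpha c1) (gamma alpha c2) = gamma alpha c3
        /\ smbr (rhoc alpha c1) (rhoc alpha c2) = rhoc alpha c3)
  /\ (forall c1 c2 : 'I_17 -> C,
        rhoc alpha c1 = rhoc alpha c2 -> gamma alpha c1 = gamma alpha c2).
Proof.
split; first exact: part1.
split; first exact: part2.
split; first exact: part3.
move=> c1 c2 /part4 h; rewrite /gamma; apply: eq_bigr => i _; by rewrite h.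
Qed.
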